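(* Let $m<p<p_F(\sigma)=m+\frac{\sigma+2}{N}$ and $Z_0=\frac{(\sigma+2)[m(N+\sigma)-p(N-2)]}{(p-m)^2}$. (i) If a trajectory $(x,y,z)(\eta_1)$ of system (S2) with $z\ge0$ crosses the plane $\{y=-\frac{\sigma+2}{p-m}\}$ from $\{y>-\frac{\sigma+2}{p-m}\}$ into $\{y<-\frac{\sigma+2}{p-m}\}$ at some time, then it remains in $\{y<-\frac{\sigma+2}{p-m}\}$ for all later times. (ii) If a trajectory satisfies $y(\eta_{1,*})=-\frac{\sigma+2}{p-m}$ and $\dot y(\eta_{1,*})=0$ for some $\eta_{1,*}$, then it is contained in the invariant line $\{y=-\frac{\sigma+2}{p-m},\ z=Z_0\}$; in particular no other trajectory is tangent to the plane $\{y=-\frac{\sigma+2}{p-m}\}$.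
   Context: Let $N\geq1$, $m>1$, $\sigma>0$. System (S2) is $$\dot x=x(2-(m-1)y),\quad \dot y=-x-(N-2)y+z-my^2-\tfrac{p-m}{\sigma+2}xy,\quad \dot z=z(\sigma+2+(p-m)y),$$ considered for $x\ge0$, $z\ge0$. *)

(* Defs.v *)
From Stdlib Require Import Reals.
Open Scope R_scope.

Definition open_interval (I : R -> Prop) : Prop :=
  (exists t, I t) /\
  (forall s t u, I s -> I u -> s <= t <= u -> I t) /\
  (forall t, I t -> exists e, e > 0 /\ forall s, Rabs (s - t) < e -> I s).

Definition S2_solution (N : nat) (m p sigma : R) (I : R -> Prop)
  (x y z : R -> R) : Prop :=
  open_interval I /\
  forall t, I t ->
    0 <= x t /\ 0 <= z t /\
    derivable_pt_lim x t (x t * (2 - (m - 1) * y t)) /\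
    derivable_pt_lim y t
      (- x t - (INR N - 2) * y t + z t - m * (y t)^2
       - (p - m) / (sigma + 2) * x t * y t) /\
    derivable_pt_lim z t (z t * (sigma + 2 + (p - m) * y t)).

Definition Ycrit (m p sigma : R) : R := - (sigma + 2) / (p - m).
Definition Zcrit (N : nat) (m p sigma : R) : R :=
  (sigma + 2) * (m * (INR N + sigma) - p * (INR N - 2)) / (p - m)^2.

(* Main.v *)
Require Import Defs.
From Stdlib Require Import Reals Lra Psatz.
Open Scope R_scope.

Lemma dplM f g x lf lg : derivable_pt_lim f x lf -> derivable_pt_lim g x lg ->
  derivable_pt_lim (fun s => f s * g s) x (lf * g x + f x * lg).
Proof. intros A B. exact (derivable_pt_lim_mult f g x lf lg A B). Qed.
Lemma dplP f g x lf lg : derivable_pt_lim f x lf -> derivable_pt_lim g x lg ->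
  derivable_pt_lim (fun s => f s + g s) x (lf + lg).
Proof. intros A B. exact (derivable_pt_lim_plus f g x lf lg A B). Qed.
Lemma dplSc f x l c : derivable_pt_lim f x l ->
  derivable_pt_lim (fun s => f s - c) x l.
Proof. intros A. replace l with (l - 0) by ring.
  exact (derivable_pt_lim_minus f (fct_cte c) x l 0 A (derivable_pt_lim_const c x)). Qed.
Lemma dplK f x l a : derivable_pt_lim f x l ->
  derivable_pt_lim (fun s => a * f s) x (a * l).
Proof. intros A. exact (derivable_pt_lim_scal f a x l A). Qed.
Lemma dplE k x : derivable_pt_lim (fun s => exp (k * s)) x (k * exp (k * x)).
Proof.
  assert (H := derivable_pt_lim_comp (fun s => k * s) exp x k (exp (k*x))).
  rewrite Rmult_comm. apply H.
  assert (G := dplK (fun s => s) x 1 k (derivable_pt_lim_id x)).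
  rewrite Rmult_1_r in G. exact G.
  apply derivable_pt_lim_exp. Qed.
Lemma dpl_cont f x l : derivable_pt_lim f x l -> continuity_pt f x.
Proof. intros A. apply derivable_continuous_pt. exists l. exact A. Qed.
Lemma cont_abs f x : continuity_pt f x -> continuity_pt (fun s => Rabs (f s)) x.
Proof. intros A. exact (continuity_pt_comp f Rabs x A (Rcontinuity_abs _)). Qed.

Lemma abs_le_inv a A : Rabs a <= A -> -A <= a <= A.
Proof. unfold Rabs; destruct (Rcase_abs a); lra. Qed.

Lemma bnd_ineq w v a b A B : Rabs a <= A -> Rabs b <= B ->
  Rabs (2*(w*w)*a + 2*(w*v)*b) <= (2*A+B)*(w*w+v*v).
Proof.
  intros Ha Hb. apply abs_le_inv in Ha. apply abs_le_inv in Hb. destruct Ha, Hb. apply Rabs_le.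
  assert (0 <= w*w) by nra. pose proof (Rle_0_sqr (w-v)). pose proof (Rle_0_sqr (w+v)). unfold Rsqr in *.
  assert (0 <= (A-a)*(w*w)) by nra. assert (0 <= (A+a)*(w*w)) by nra.
  assert (0 <= (B+b)*((w-v)*(w-v))) by nra. assert (0 <= (B-b)*((w+v)*(w+v))) by nra.
  split; nra.
Qed.

Lemma dpl_eq f x l l' : derivable_pt_lim f x l -> l = l' -> derivable_pt_lim f x l'.
Proof. intros A ->; exact A. Qed.
Lemma dplAc f x l c : derivable_pt_lim f x l ->
  derivable_pt_lim (fun s => f s + c) x l.
Proof. intros A. apply dpl_eq with (l + 0). 2: ring.
  exact (derivable_pt_lim_plus f (fct_cte c) x l 0 A (derivable_pt_lim_const c x)). Qed.
Lemma dpl_lin f g x lf lg al be ga : derivable_pt_lim f x lf -> derivable_pt_lim g x lg ->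
  derivable_pt_lim (fun s => al * f s + be * g s + ga) x (al*lf + be*lg).
Proof. intros A B. apply dplAc. apply dplP; apply dplK; assumption. Qed.

Lemma gron_fwd (u D : R -> R) C a b : a < b ->
  (forall c, a <= c <= b -> derivable_pt_lim u c (D c)) ->
  (forall c, a <= c <= b -> Rabs (D c) <= C * u c) ->
  (forall c, a <= c <= b -> 0 <= u c) -> u a = 0 -> u b = 0.
Proof.
  intros Hab Hd Hb Hp H0.
  destruct (MVT_cor2 (fun s => u s * exp (-C * s))
     (fun s => D s * exp (-C*s) + u s * (-C * exp (-C*s))) a b Hab) as [c [E Hc]].
  { intros c0 Hc0. cbv beta. apply (dplM u (fun s => exp (_ * s))). apply Hd; lra. apply dplE. }
  rewrite H0 in E. assert (Hc' : a <= c <= b) by lra.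
  specialize (Hb c Hc'). apply abs_le_inv in Hb. destruct Hb.
  pose proof (exp_pos (-C*c)). pose proof (exp_pos (-C*b)).
  assert (0 <= u b) by (apply Hp; lra).
  assert (D c * exp (- C * c) + u c * (- C * exp (- C * c)) <= 0).
  { replace (D c * exp (- C * c) + u c * (- C * exp (- C * c))) with
       ((D c - C * u c) * exp (-C*c)) by ring. nra. }
  assert (u b * exp (-C*b) <= 0) by nra. nra.
Qed.

Lemma gron_bwd (u D : R -> R) C a b : a < b ->
  (forall c, a <= c <= b -> derivable_pt_lim u c (D c)) ->
  (forall c, a <= c <= b -> Rabs (D c) <= C * u c) ->
  (forall c, a <= c <= b -> 0 <= u c) -> u b = 0 -> u a = 0.
Proof.
  intros Hab Hd Hb Hp H0.
  destruct (MVT_cor2 (fun s => u s * exp (C * s))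
     (fun s => D s * exp (C*s) + u s * (C * exp (C*s))) a b Hab) as [c [E Hc]].
  { intros c0 Hc0. cbv beta. apply (dplM u (fun s => exp (_ * s))). apply Hd; lra. apply dplE. }
  rewrite H0 in E. assert (Hc' : a <= c <= b) by lra.
  specialize (Hb c Hc'). apply abs_le_inv in Hb. destruct Hb.
  pose proof (exp_pos (C*c)). pose proof (exp_pos (C*a)).
  assert (0 <= u a) by (apply Hp; lra).
  assert (0 <= D c * exp (C * c) + u c * (C * exp (C * c))).
  { replace (D c * exp (C * c) + u c * (C * exp (C * c))) with
       ((D c + C * u c) * exp (C*c)) by ring. nra. }
  assert (u a * exp (C*a) <= 0) by nra. nra.
Qed.

Lemma ydot_on_plane N m p sigma x z : m < p -> 0 < sigma ->
  - x - (INR N - 2) * Ycrit m p sigma + z - m * (Ycrit m p sigma)^2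
  - (p - m) / (sigma + 2) * x * Ycrit m p sigma = z - Zcrit N m p sigma.
Proof. intros. unfold Ycrit, Zcrit. field. lra. Qed.

Lemma interval_conv (I : R -> Prop) (a b c : R) : Defs.open_interval I -> I a -> I b -> a <= c <= b -> I c.
Proof. intros [_ [H _]] A B C. exact (H a c b A B C). Qed.

Lemma uniq_line N m p sigma (I : R -> Prop) x y z eta : m < p -> 0 < sigma ->
  S2_solution N m p sigma I x y z -> I eta ->
  y eta = Ycrit m p sigma -> z eta = Zcrit N m p sigma ->
  forall t, I t -> y t = Ycrit m p sigma /\ z t = Zcrit N m p sigma.
Proof.
  intros Hmp Hs [HI Hsol] He Hy Hz t Ht.
  set (Y := Ycrit m p sigma) in *. set (Z0 := Zcrit N m p sigma) in *.
  assert (HY0 : Y*(p-m) = -(sigma+2)) by (unfold Y, Ycrit; field; lra).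
  assert (HY : Y <> 0) by (intro E; rewrite E in HY0; lra).
  set (u := fun s => (y s - Y)*(y s - Y) + (z s - Z0)*(z s - Z0)).
  set (a := fun s => /Y * x s + (-m) * y s + (m*Y - (INR N - 2) - 2*m*Y)).
  set (b := fun s => (p-m) * z s + 0 * z s + 1).
  set (D := fun s => 2*((y s - Y)*(y s - Y))*a s + 2*((y s - Y)*(z s - Z0))*b s).
  assert (Hd : forall c, I c -> derivable_pt_lim u c (D c)).
  { intros c Hc. destruct (Hsol c Hc) as (_ & _ & _ & Dy & Dz).
    unfold u. eapply dpl_eq.
    apply (dplP (fun s => (y s - Y)*(y s - Y)) (fun s => (z s - Z0)*(z s - Z0)));
     apply (dplM (fun s => _ - _) (fun s => _ - _)); apply dplSc; eassumption.
    unfold D, a, b. unfold Y, Z0, Ycrit, Zcrit. field. lra. }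
  assert (Hca : forall c, I c -> continuity_pt (fun s => Rabs (a s)) c).
  { intros c Hc. destruct (Hsol c Hc) as (_ & _ & Dx & Dy & _).
    apply cont_abs. eapply dpl_cont. unfold a. apply dpl_lin; eassumption. }
  assert (Hcb : forall c, I c -> continuity_pt (fun s => Rabs (b s)) c).
  { intros c Hc. destruct (Hsol c Hc) as (_ & _ & _ & _ & Dz).
    apply cont_abs. eapply dpl_cont. unfold b. apply dpl_lin; eassumption. }
  assert (Hup : u eta = 0). { unfold u. rewrite Hy, Hz. ring. }
  assert (Hpos : forall c, 0 <= u c).
  { intros c. unfold u. pose proof (Rle_0_sqr (y c - Y)). pose proof (Rle_0_sqr (z c - Z0)).
    unfold Rsqr in *. lra. }
  assert (Hfin : u t = 0 -> y t = Y /\ z t = Z0).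
  { unfold u. intro E. pose proof (Rle_0_sqr (y t - Y)). pose proof (Rle_0_sqr (z t - Z0)).
    unfold Rsqr in *. split; nra. }
  apply Hfin.
  assert (Bnd : forall lo hi, lo <= hi -> I lo -> I hi -> exists C,
     forall c, lo <= c <= hi -> Rabs (D c) <= C * u c).
  { intros lo hi Hlh Hlo Hhi.
    destruct (continuity_ab_maj _ lo hi Hlh (fun c Hc => Hca c (interval_conv I lo hi c HI Hlo Hhi Hc))) as [ca [Ca _]].
    destruct (continuity_ab_maj _ lo hi Hlh (fun c Hc => Hcb c (interval_conv I lo hi c HI Hlo Hhi Hc))) as [cb [Cb _]].
    exists (2 * Rabs (a ca) + Rabs (b cb)). intros c Hc. unfold D. unfold u.
    apply bnd_ineq; [apply Ca | apply Cb]; exact Hc. }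
  destruct (Rtotal_order eta t) as [Hlt | [Heq | Hgt]].
  - destruct (Bnd eta t) as [C HC]; try lra; auto.
    apply (gron_fwd u D C eta t Hlt); auto.
    intros c Hc. apply Hd. apply (interval_conv I eta t c HI He Ht Hc).
  - subst t. exact Hup.
  - destruct (Bnd t eta) as [C HC]; try lra; auto.
    apply (gron_bwd u D C t eta Hgt); auto.
    intros c Hc. apply Hd. apply (interval_conv I t eta c HI Ht He Hc).
Qed.

Lemma dpl_loc f x l : derivable_pt_lim f x l -> forall eps, 0 < eps ->
  exists del, 0 < del /\ forall r, Rabs (r - x) < del -> Rabs (f r - f x) < eps.
Proof.
  intros H eps Heps. pose proof (dpl_cont f x l H) as C.
  unfold continuity_pt, continue_in, limit1_in, limit_in in C.
  destruct (C eps Heps) as [al [Hal Hc]]. exists al. split; [lra|].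
  intros r Hr. destruct (Req_dec r x) as [->|Hne].
  - rewrite Rminus_diag, Rabs_R0. exact Heps.
  - apply (Hc r). split. unfold D_x, no_cond. split; auto. exact Hr.
Qed.

Lemma sign_pos f x d : derivable_pt_lim f x d -> 0 < d ->
  exists e, 0 < e /\ forall h, 0 < h < e -> f (x+h) > f x.
Proof.
  intros H Hd. destruct (H (d/2) ltac:(lra)) as [del Hdel].
  exists del. split. apply cond_pos. intros h Hh.
  assert (A := Hdel h ltac:(lra) ltac:(rewrite Rabs_right; lra)).
  apply Rabs_def2 in A. destruct A as [A1 A2].
  assert (B : (f (x+h) - f x)/h > 0) by lra.
  assert (f (x + h) - f x = (f (x+h) - f x)/h * h) by (field; lra). nra.
Qed.

Lemma sign_neg f x d : derivable_pt_lim f x d -> d < 0 ->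
  exists e, 0 < e /\ forall h, 0 < h < e -> f (x-h) > f x.
Proof.
  intros H Hd. destruct (H (-d/2) ltac:(lra)) as [del Hdel].
  exists del. split. apply cond_pos. intros h Hh.
  assert (A := Hdel (-h) ltac:(lra) ltac:(rewrite Rabs_left; lra)).
  apply Rabs_def2 in A. destruct A as [A1 A2].
  assert (B : (f (x+-h) - f x)/(-h) < 0) by lra.
  assert (f (x + - h) - f x = (f (x+-h) - f x)/(-h) * (-h)) by (field; lra).
  replace (x - h) with (x + - h) by ring. nra.
Qed.

Lemma part1 N m p sigma : m < p -> 0 < sigma ->
  (forall (I : R -> Prop) (x y z : R -> R) (eta1 : R),
     S2_solution N m p sigma I x y z -> I eta1 ->
     y eta1 = Ycrit m p sigma ->
     (exists delta, delta > 0 /\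
        (forall t, eta1 - delta < t < eta1 -> I t -> y t > Ycrit m p sigma) /\
        (forall t, eta1 < t < eta1 + delta -> I t -> y t < Ycrit m p sigma)) ->
     forall t, I t -> eta1 < t -> y t < Ycrit m p sigma).
Proof.
  intros Hmp Hs I x y z eta1 Hsol0 He Hy [del [Hdel [_ Haft]]] t Ht Hlt.
  pose proof Hsol0 as [HI Hsol].
  set (Y := Ycrit m p sigma) in *. set (Z0 := Zcrit N m p sigma).
  assert (HY0 : Y*(p-m) = -(sigma+2)) by (unfold Y, Ycrit; field; lra).
  assert (Dyp : forall s, I s -> y s = Y -> derivable_pt_lim y s (z s - Z0)).
  { intros s Is Ys. destruct (Hsol s Is) as (_ & _ & _ & Dy & _).
    rewrite Ys in Dy. unfold Y in Dy. rewrite ydot_on_plane in Dy; auto. }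
  destruct HI as [HIne [HIc HIo]].
  destruct (HIo eta1 He) as [eI [HeI HIe]].
  assert (Near : forall h, 0 < h -> h < del -> h < eI -> I (eta1 + h) /\ y (eta1 + h) < Y).
  { intros h H1 H2 H3. assert (I (eta1+h)) by (apply HIe; rewrite Rabs_right; lra).
    split; auto. apply Haft; auto; lra. }
  assert (HconvI : forall c, eta1 <= c <= t -> I c) by (intros c Hc; exact (HIc eta1 c t He Ht Hc)).
  destruct (Rtotal_order (z eta1) Z0) as [Hzl | [Hze | Hzg]].
  2:{ exfalso. set (h := Rmin del eI / 2).
      assert (0 < h /\ h < del /\ h < eI) by (unfold h, Rmin; destruct Rle_dec; lra).
      destruct (Near h) as [I1 Y1]; try tauto.
      destruct (uniq_line N m p sigma I x y z eta1 Hmp Hs Hsol0 He Hy Hze _ I1) as [Q1 _]. fold Y in Q1. rewrite Q1 in Y1. lra. }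
  2:{ exfalso. destruct (sign_pos y eta1 (z eta1 - Z0) (Dyp eta1 He Hy) ltac:(lra)) as [e [He0 Hsp]].
      set (h := Rmin e (Rmin del eI) / 2).
      assert (0 < h /\ h < e /\ h < del /\ h < eI) by (unfold h, Rmin; repeat destruct Rle_dec; lra).
      destruct (Near h) as [I1 Y1]; try tauto.
      specialize (Hsp h ltac:(lra)). lra. }
  destruct (Rlt_or_le (y t) Y) as [Hok | Hbad]; [exact Hok | exfalso].
  set (S := fun s => eta1 <= s <= t /\ forall r, eta1 < r <= s -> y r < Y).
  assert (Sb : bound S) by (exists t; intros s [Hs1 _]; lra).
  assert (Sn : exists s, S s) by (exists eta1; split; [lra| intros; lra]).
  destruct (completeness S Sb Sn) as [ss [Hub Hleast]].
  assert (Ha1 : eta1 <= ss) by (apply Hub; split; [lra| intros; lra]).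
  assert (Ha2 : ss <= t) by (apply Hleast; intros s [Hs1 _]; lra).
  assert (Hb : forall r, eta1 < r < ss -> y r < Y).
  { intros r Hr. destruct (Rlt_or_le (y r) Y) as [Ok|Bad]; auto. exfalso.
    assert (ss <= r); [|lra]. apply Hleast. intros s [Hs1 Hs2].
    destruct (Rle_or_lt s r); auto. specialize (Hs2 r ltac:(lra)). lra. }
  assert (Hc : eta1 < ss).
  { set (s1 := eta1 + Rmin del (t - eta1) / 2).
    assert (eta1 < s1 /\ s1 < eta1 + del /\ s1 <= t) by (unfold s1, Rmin; destruct Rle_dec; lra).
    assert (s1 <= ss); [|lra]. apply Hub. split; [lra|].
    intros r Hr. apply Haft; [lra|]. apply HconvI; lra. }
  assert (Iss : I ss) by (apply HconvI; lra).
  destruct (Hsol ss Iss) as (_ & _ & _ & Dyss & _).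
  assert (Hd : y ss = Y).
  { destruct (Rtotal_order (y ss) Y) as [Hl | [Heq | Hg]]; auto; exfalso.
    - destruct (Req_dec ss t) as [Et|Nt]. { rewrite Et in Hl; lra. }
      destruct (dpl_loc y ss _ Dyss (Y - y ss) ltac:(lra)) as [d2 [Hd2 Hl2]].
      set (s' := ss + Rmin d2 (t - ss) / 2).
      assert (ss < s' /\ s' - ss < d2 /\ s' <= t) by (unfold s', Rmin; destruct Rle_dec; lra).
      assert (s' <= ss); [|lra]. apply Hub. split; [lra|].
      intros r Hr. destruct (Rlt_or_le r ss). apply Hb; lra.
      assert (A := Hl2 r ltac:(rewrite Rabs_right; lra)). apply Rabs_def2 in A. lra.
    - destruct (dpl_loc y ss _ Dyss (y ss - Y) ltac:(lra)) as [d2 [Hd2 Hl2]].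
      set (r := ss - Rmin d2 (ss - eta1) / 2).
      assert (eta1 < r < ss /\ ss - r < d2) by (unfold r, Rmin; destruct Rle_dec; lra).
      assert (A := Hl2 r ltac:(rewrite Rabs_left; lra)). apply Rabs_def2 in A.
      specialize (Hb r ltac:(lra)). lra. }
  assert (Hz : z ss <= z eta1).
  { destruct (MVT_cor2 z (fun c => z c * (sigma + 2 + (p - m) * y c)) eta1 ss Hc) as [c [E Hcc]].
    { intros c Hc'. destruct (Hsol c ltac:(apply HconvI; lra)) as (_ & _ & _ & _ & Dz). exact Dz. }
    destruct (Hsol c ltac:(apply HconvI; lra)) as (_ & Zp & _).
    specialize (Hb c Hcc).
    assert (P1 : (p-m)*(Y - y c) > 0) by (apply Rmult_lt_0_compat; lra).
    assert (P2 : sigma + 2 + (p - m) * y c < 0) by lra.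
    assert (P3 : z c * (sigma + 2 + (p - m) * y c) <= 0).
    { assert (0 <= z c * (-(sigma + 2 + (p - m) * y c))) by (apply Rmult_le_pos; lra). lra. }
    assert (0 <= - (z c * (sigma + 2 + (p - m) * y c)) * (ss - eta1)) by (apply Rmult_le_pos; lra).
    lra. }
  destruct (sign_neg y ss (z ss - Z0) (Dyp ss Iss Hd) ltac:(lra)) as [e [He0 Hsn]].
  set (h := Rmin e (ss - eta1) / 2).
  assert (0 < h /\ h < e /\ h < ss - eta1) by (unfold h, Rmin; destruct Rle_dec; lra).
  specialize (Hsn h ltac:(lra)). specialize (Hb (ss - h) ltac:(lra)). lra.
Qed.

Theorem lemma5p2 (N : nat) (m p sigma : R) :
  (1 <= N)%nat -> 1 < m -> 0 < sigma ->
  m < p -> p < m + (sigma + 2) / INR N ->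
  (* (i) crossing from {y > Y} into {y < Y} is definitive *)
  (forall (I : R -> Prop) (x y z : R -> R) (eta1 : R),
     S2_solution N m p sigma I x y z -> I eta1 ->
     y eta1 = Ycrit m p sigma ->
     (exists delta, delta > 0 /\
        (forall t, eta1 - delta < t < eta1 -> I t -> y t > Ycrit m p sigma) /\
        (forall t, eta1 < t < eta1 + delta -> I t -> y t < Ycrit m p sigma)) ->
     forall t, I t -> eta1 < t -> y t < Ycrit m p sigma) /\
  (* (ii) tangency to the plane forces the trajectory onto the invariant line *)
  (forall (I : R -> Prop) (x y z : R -> R) (eta : R),
     S2_solution N m p sigma I x y z -> I eta ->
     y eta = Ycrit m p sigma -> derivable_pt_lim y eta 0 ->
     forall t, I t -> y t = Ycrit m p sigma /\ z t = Zcrit N m p sigma).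
Proof.
  intros _ _ Hs Hmp _. split.
  - apply part1; auto.
  - intros I x y z eta Hsol He Hy Hd0.
    pose proof Hsol as [_ Hs2]. destruct (Hs2 eta He) as (_ & _ & _ & Dy & _).
    rewrite Hy in Dy. rewrite ydot_on_plane in Dy; auto.
    pose proof (uniqueness_limite y eta _ _ Dy Hd0) as E.
    apply (uniq_line N m p sigma I x y z eta Hmp Hs Hsol He Hy). lra.
Qed.
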